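(* The criterion $\Phi(g)=\frac12\sum_{k=0}^{S+1}(g(k)-\mathbb W(k))^2$ admits a unique minimizer $\hat g$ over $\mathcal C(\mathcal K)$. Moreover, an element $\hat g\in\mathcal C(\mathcal K)$ is this minimizer if and only if the process $\widehat{\mathbb H}$ defined on $\{0,\dots,S+2\}$ by $\widehat{\mathbb H}(0)=0$ and $\widehat{\mathbb H}(x)=\sum_{k=0}^{x-1}\sum_{j=0}^k\hat g(j)$ for $x\in\{1,\dots,S+2\}$ satisfies $\widehat{\mathbb H}(x)\ge\mathbb H(x)$ for all $x\in\{0,\dots,S+2\}$, with equality $\widehat{\mathbb H}(x)=\mathbb H(x)$ whenever $x\in\{s_0,s_1,\dots,s_{m+1},S+2\}$ or $x$ is a knot of $\hat g$ lying in $\{s_j+1,\dots,s_{j+1}-1\}$ for some $j\in\{0,\dots,m\}$.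
   Context: Let $p_0$ be a convex probability mass function on $\mathbb N=\{0,1,\dots\}$ with support $\{0,\dots,S\}$, $S\ge1$ an integer (convex means $\Delta p_0(k)=p_0(k+1)-2p_0(k)+p_0(k-1)\ge0$ for all $k\ge1$). A knot of a sequence (or finite vector) $p$ is an integer $k\ge1$ (in the index range where $\Delta p(k)$ is defined) with $\Delta p(k)>0$; note $S+1$ is a knot of $p_0$. Let $F_{p_0}(k)=\sum_{j=0}^kp_0(j)$, $F_{p_0}(-1)=0$. Let $\mathbb U$ be a standard Brownian bridge on $[0,1]$, define $\mathbb W(k)=\mathbb U(F_{p_0}(k))-\mathbb U(F_{p_0}(k-1))$ for $k\in\{0,\dots,S+1\}$ (so $\mathbb W(S+1)=0$), and $\mathbb H(0)=0$, $\mathbb H(z)=\sum_{k=0}^{z-1}\mathbb U(F_{p_0}(k))$ for $z\ge1$. Let $s_1<\dots<s_m$ be the knots of $p_0$ lying in $\{1,\dots,S\}$ (the interior knots; possibly $m=0$), and put $s_0=0$, $s_{m+1}=S+1$, $\mathcal K=\{s_1,\dots,s_m\}$. A vector $g=(g(0),\dots,g(S+1))$ is convex on $\{a,\dots,b\}$ if $g(k+1)-2g(k)+g(k-1)\ge0$ for all $a<k<b$. $\mathcal C(\mathcal K)$ is the set of $g\in\mathbb R^{S+2}$ that are convex on $\{s_j,\dots,s_{j+1}\}$ for every $j=0,\dots,m$. The statement holds for every realization of $\mathbb U$. *)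

(* Defs.v *)
From Stdlib Require Import Reals Lra Lia.
Open Scope R_scope.

Fixpoint sumR (f : nat -> R) (n : nat) : R :=
  match n with
  | O => 0
  | S n' => sumR f n' + f n'
  end.

(* second difference  Delta f k = f(k+1) - 2 f(k) + f(k-1), used for k >= 1 *)
Definition Delta (f : nat -> R) (k : nat) : R :=
  f (S k) - 2 * f k + f (k - 1)%nat.

(* cdf p0 n = F_{p0}(n-1) = sum_{j<n} p0 j ; so F(k) = cdf (k+1), F(-1) = cdf 0 = 0 *)
Definition cdf (p0 : nat -> R) (n : nat) : R := sumR p0 n.

Definition convex_pmf_support (p0 : nat -> R) (S : nat) : Prop :=
  (forall k, (k <= S)%nat -> 0 < p0 k) /\
  (forall k, (S < k)%nat -> p0 k = 0) /\
  sumR p0 (S + 1) = 1 /\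
  (forall k, (1 <= k)%nat -> 0 <= Delta p0 k).

Definition W (U : R -> R) (p0 : nat -> R) (k : nat) : R :=
  U (cdf p0 (S k)) - U (cdf p0 k).

Definition HH (U : R -> R) (p0 : nat -> R) (z : nat) : R :=
  sumR (fun k => U (cdf p0 (S k))) z.

(* x is one of s_0 = 0, s_1, ..., s_m (interior knots of p0), s_{m+1} = S+1 *)
Definition is_s (p0 : nat -> R) (S : nat) (x : nat) : Prop :=
  x = O \/ x = (S + 1)%nat \/ ((1 <= x)%nat /\ (x <= S)%nat /\ 0 < Delta p0 x).

Definition consec_s (p0 : nat -> R) (S : nat) (a b : nat) : Prop :=
  is_s p0 S a /\ is_s p0 S b /\ (a < b)%nat /\
  (forall c, (a < c)%nat -> (c < b)%nat -> ~ is_s p0 S c).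

Definition in_CK (p0 : nat -> R) (S : nat) (g : nat -> R) : Prop :=
  forall a b, consec_s p0 S a b ->
  forall k, (a < k)%nat -> (k < b)%nat -> 0 <= Delta g k.

Definition Phi (U : R -> R) (p0 : nat -> R) (S : nat) (g : nat -> R) : R :=
  / 2 * sumR (fun k => (g k - W U p0 k) ^ 2) (S + 2).

Definition is_minimizer (U : R -> R) (p0 : nat -> R) (S : nat) (g : nat -> R) : Prop :=
  in_CK p0 S g /\ forall h, in_CK p0 S h -> Phi U p0 S g <= Phi U p0 S h.

Definition Hhat (g : nat -> R) (x : nat) : R :=
  sumR (fun k => sumR g (S k)) x.

Definition char_cond (U : R -> R) (p0 : nat -> R) (S : nat) (g : nat -> R) : Prop :=
  (forall x, (x <= S + 2)%nat -> HH U p0 x <= Hhat g x) /\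
  (forall x, (x <= S + 2)%nat ->
     (is_s p0 S x \/ x = (S + 2)%nat \/
      (exists a b, consec_s p0 S a b /\ (a < x)%nat /\ (x < b)%nat /\ 0 < Delta g x)) ->
     Hhat g x = HH U p0 x).

(* Main.v *)
Require Import Defs.
From Stdlib Require Import Reals Lra Lia Wf_nat ClassicalEpsilon Classical.
Open Scope R_scope.

Lemma sumR_ext f g n : (forall k, (k < n)%nat -> f k = g k) -> sumR f n = sumR g n.
Proof. induction n; simpl; intros H; auto. rewrite IHn by (intros; apply H; lia). rewrite H by lia; auto. Qed.

Lemma sumR_plus f g n : sumR (fun k => f k + g k) n = sumR f n + sumR g n.
Proof. induction n; simpl; [lra|rewrite IHn; lra]. Qed.

Lemma sumR_minus f g n : sumR (fun k => f k - g k) n = sumR f n - sumR g n.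
Proof. induction n; simpl; [lra|rewrite IHn; lra]. Qed.

Lemma sumR_scal c f n : sumR (fun k => c * f k) n = c * sumR f n.
Proof. induction n; simpl; [lra|rewrite IHn; lra]. Qed.

Lemma sumR_nonneg f n : (forall k, (k < n)%nat -> 0 <= f k) -> 0 <= sumR f n.
Proof. induction n; simpl; intros H; [lra|]. pose proof (H n ltac:(lia)). pose proof (IHn ltac:(intros; apply H; lia)). lra. Qed.

Lemma sumR_zero f n : (forall k, (k < n)%nat -> f k = 0) -> sumR f n = 0.
Proof. induction n; simpl; intros H; [lra|]. rewrite IHn by (intros; apply H; lia). rewrite H by lia. lra. Qed.

Lemma sumR_term f n j : (forall k, (k < n)%nat -> 0 <= f k) -> (j < n)%nat -> f j <= sumR f n.
Proof.
  induction n; simpl; intros H Hj; [lia|].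
  destruct (Nat.eq_dec j n) as [->|Hne].
  - pose proof (sumR_nonneg f n ltac:(intros; apply H; lia)). lra.
  - pose proof (IHn ltac:(intros; apply H; lia) ltac:(lia)). pose proof (H n ltac:(lia)). lra.
Qed.

Lemma Delta_lin a b g h k : Defs.Delta (fun j => a * g j + b * h j) k = a * Defs.Delta g k + b * Defs.Delta h k.
Proof. unfold Defs.Delta; ring. Qed.

Lemma in_CK_comb p0 S a b g h : 0 <= a -> 0 <= b -> in_CK p0 S g -> in_CK p0 S h ->
  in_CK p0 S (fun j => a * g j + b * h j).
Proof.
  intros Ha Hb Hg Hh x y Hc k H1 H2. rewrite Delta_lin.
  pose proof (Hg x y Hc k H1 H2). pose proof (Hh x y Hc k H1 H2). nra.
Qed.

Definition ip (N : nat) (d v : nat -> R) := sumR (fun k => d k * v k) N.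
Definition nrm (N : nat) (v : nat -> R) := sumR (fun k => v k ^ 2) N.

Lemma Phi_diff U p0 S g h :
  Phi U p0 S h - Phi U p0 S g =
  ip (S+2) (fun k => g k - W U p0 k) (fun k => h k - g k) + / 2 * nrm (S+2) (fun k => h k - g k).
Proof.
  unfold Phi, ip, nrm. rewrite <- Rmult_minus_distr_l, <- sumR_minus.
  rewrite <- (sumR_scal (/2) (fun k => (h k - g k)^2)).
  rewrite <- sumR_plus. rewrite <- sumR_scal. apply sumR_ext. intros. field.
Qed.

Lemma sumR_lin3 x y z f g h n : sumR (fun k => x * f k + y * g k + z * h k) n = x * sumR f n + y * sumR g n + z * sumR h n.
Proof. induction n; simpl; [lra|rewrite IHn; ring]. Qed.

Lemma Phi_mid U p0 S a b :
  Phi U p0 S (fun k => /2 * a k + /2 * b k) =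
  (Phi U p0 S a + Phi U p0 S b) / 2 - / 8 * nrm (S+2) (fun k => a k - b k).
Proof.
  unfold Phi, nrm.
  rewrite (sumR_ext _ (fun k => /2 * (a k - W U p0 k)^2 + /2 * (b k - W U p0 k)^2 + (-/4) * (a k - b k)^2)) by (intros; field).
  rewrite sumR_lin3. field.
Qed.

Lemma nrm_nonneg N v : 0 <= nrm N v.
Proof. apply sumR_nonneg; intros; apply pow2_ge_0. Qed.

Lemma nrm_term N v k : (k < N)%nat -> v k ^ 2 <= nrm N v.
Proof. intros; apply (sumR_term (fun k => v k ^ 2)); auto; intros; apply pow2_ge_0. Qed.

Definition hinge (x k : nat) : R := INR (x - k)%nat.

Lemma sumR_trunc f m N : sumR (fun k => if (k <? m)%nat then f k else 0) N = sumR f (Nat.min m N).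
Proof.
  induction N; simpl.
  - rewrite Nat.min_0_r; reflexivity.
  - rewrite IHN. destruct (Nat.ltb_spec N m).
    + replace (Nat.min m (Datatypes.S N)) with (Datatypes.S (Nat.min m N)) by lia.
      replace (Nat.min m N) with N by lia. simpl. reflexivity.
    + replace (Nat.min m (Datatypes.S N)) with (Nat.min m N) by lia. lra.
Qed.

Definition DD (d : nat -> R) (x : nat) : R := sumR (fun k => sumR d (Datatypes.S k)) x.

Lemma hinge_sum d x N : (x <= N)%nat -> sumR (fun k => d k * hinge x k) N = DD d x.
Proof.
  induction x; intros Hx.
  - unfold DD; simpl. apply sumR_zero. intros; unfold hinge; simpl; ring.
  - change (DD d (Datatypes.S x)) with (DD d x + sumR d (Datatypes.S x)). rewrite <- IHx by lia.
    replace (sumR d (Datatypes.S x)) with (sumR d (Nat.min (Datatypes.S x) N)) by (f_equal; lia).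
    rewrite <- (sumR_trunc d (Datatypes.S x) N).
    rewrite <- sumR_plus. apply sumR_ext. intros k Hk. unfold hinge.
    destruct (Nat.ltb_spec k (Datatypes.S x)).
    + replace (Datatypes.S x - k)%nat with (Datatypes.S (x - k)) by lia. rewrite S_INR. ring.
    + replace (Datatypes.S x - k)%nat with 0%nat by lia. replace (x - k)%nat with 0%nat by lia. simpl; ring.
Qed.

Lemma Delta_hinge x k : (1 <= k)%nat -> Defs.Delta (hinge x) k = if Nat.eqb k x then 1 else 0.
Proof.
  intros Hk. unfold Defs.Delta, hinge. destruct (Nat.eqb_spec k x).
  - subst. replace (x - Datatypes.S x)%nat with 0%nat by lia. rewrite Nat.sub_diag.
    replace (x - (x - 1))%nat with 1%nat by lia. simpl; ring.
  - destruct (Compare_dec.le_lt_dec x k).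
    + replace (x - Datatypes.S k)%nat with 0%nat by lia. replace (x - k)%nat with 0%nat by lia.
      replace (x - (k - 1))%nat with 0%nat by lia. simpl; ring.
    + replace (x - (k-1))%nat with (Datatypes.S (Datatypes.S (x - Datatypes.S k))) by lia.
      replace (x - k)%nat with (Datatypes.S (x - Datatypes.S k)) by lia.
      rewrite !S_INR. ring.
Qed.

Lemma sumR_W U p0 n : U 0 = 0 -> sumR (W U p0) n = U (cdf p0 n).
Proof.
  intros H0. induction n; simpl.
  - unfold cdf; simpl. rewrite H0; reflexivity.
  - rewrite IHn. unfold W, cdf. simpl. ring.
Qed.

Lemma D_eq U p0 g x : U 0 = 0 -> Hhat g x - HH U p0 x = DD (fun j => g j - W U p0 j) x.
Proof.
  intros H0. unfold Hhat, HH, DD. rewrite <- sumR_minus. apply sumR_ext. intros.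
  rewrite sumR_minus. rewrite sumR_W by auto. reflexivity.
Qed.

Lemma sbp d h n :
  sumR (fun k => d k * h k) (n+2) =
  sumR (fun x => DD d (x+1) * Defs.Delta h (x+1)) n + DD d (n+2) * h (n+1)%nat + DD d (n+1) * (h n - 2 * h (n+1)%nat).
Proof.
  induction n.
  - unfold DD; simpl. ring.
  - replace (Datatypes.S n + 2)%nat with (Datatypes.S (n+2)) by lia. simpl sumR at 1.
    rewrite IHn. simpl sumR.
    replace (Datatypes.S n + 2)%nat with (Datatypes.S (Datatypes.S (n + 1))) by lia.
    replace (Datatypes.S n + 1)%nat with (Datatypes.S (n+1)) by lia.
    replace (n + 2)%nat with (Datatypes.S (n+1)) by lia.
    unfold DD; simpl sumR. unfold Defs.Delta.
    replace (Datatypes.S (n+1) - 1)%nat with (n+1)%nat by lia.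
    replace (n + 1 - 1)%nat with n by lia.
    replace (n+1)%nat with (Datatypes.S n) by lia. simpl. ring.
Qed.

Lemma max_below (P : nat -> Prop) k : P 0%nat -> (0 < k)%nat ->
  exists a, (a < k)%nat /\ P a /\ forall c, (a < c)%nat -> (c < k)%nat -> ~ P c.
Proof.
  intros P0. induction k; intros Hk; [lia|].
  destruct (Nat.eq_dec k 0) as [->|Hk0].
  - exists 0%nat. split; [lia|split; auto]. intros; lia.
  - destruct (classic (P k)) as [Pk|nPk].
    + exists k. split; [lia|split; auto]. intros; lia.
    + destruct (IHk ltac:(lia)) as [a [Ha [Pa Hc]]]. exists a. split; [lia|split; auto].
      intros c H1 H2. destruct (Nat.eq_dec c k) as [->|]; auto. apply Hc; lia.
Qed.

Lemma min_above (P : nat -> Prop) k m : P m -> (k < m)%nat ->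
  exists b, (k < b)%nat /\ P b /\ forall c, (k < c)%nat -> (c < b)%nat -> ~ P c.
Proof.
  intros Pm Hkm.
  destruct (dec_inh_nat_subset_has_unique_least_element (fun c => (k < c)%nat /\ P c))
    as [b [[[Hb Pb] Hl] _]].
  - intros n. apply classic.
  - exists m; auto.
  - exists b. split; auto. split; auto. intros c H1 H2 Pc. specialize (Hl c (conj H1 Pc)). lia.
Qed.

Lemma is_s_0 p0 S : is_s p0 S 0. Proof. left; auto. Qed.
Lemma is_s_end p0 S : is_s p0 S (S+1). Proof. right; left; auto. Qed.
Lemma is_s_le p0 S x : is_s p0 S x -> (x <= S + 1)%nat.
Proof. intros [H|[H|H]]; lia. Qed.

Lemma block p0 S k : (1 <= k)%nat -> (k <= S)%nat -> ~ is_s p0 S k ->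
  exists a b, consec_s p0 S a b /\ (a < k)%nat /\ (k < b)%nat.
Proof.
  intros H1 H2 Hn.
  destruct (max_below (is_s p0 S) k (is_s_0 p0 S) ltac:(lia)) as [a [Ha [Pa Hca]]].
  destruct (min_above (is_s p0 S) k (S+1) (is_s_end p0 S) ltac:(lia)) as [b [Hb [Pb Hcb]]].
  exists a, b. split; [|lia]. split; [auto|split; [auto|split; [lia|]]].
  intros c Hac Hcb'. destruct (Nat.lt_total c k) as [Hlt|[->|Hgt]].
  - apply Hca; lia.
  - auto.
  - apply Hcb; lia.
Qed.

Lemma small_t a q : 0 <= q -> (forall t, 0 < t -> t <= 1 -> 0 <= t * a + / 2 * t ^ 2 * q) -> 0 <= a.
Proof.
  intros Hq H. destruct (Rle_or_lt 0 a) as [|Ha]; auto. exfalso.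
  set (t := - a / (q - a + 1)).
  assert (Hden : 0 < q - a + 1) by lra.
  assert (Ht0 : 0 < t) by (unfold t; apply Rdiv_lt_0_compat; lra).
  assert (Ht1 : t <= 1) by (unfold t; apply Rmult_le_reg_r with (q - a + 1); [lra|]; unfold Rdiv; rewrite Rmult_assoc, Rinv_l; lra).
  specialize (H t Ht0 Ht1).
  assert (Htq : t * q <= - a) by (unfold t; apply Rmult_le_reg_r with (q - a + 1); [lra|];
     unfold Rdiv; replace (- a * / (q - a + 1) * q * (q - a + 1)) with (- a * q * ((q - a + 1) * / (q - a + 1))) by ring;
     rewrite Rinv_r by lra; nra).
  assert (0 <= t * (a + / 2 * (t * q))) by (replace (t * (a + / 2 * (t * q))) with (t * a + / 2 * t ^ 2 * q) by ring; auto).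
  assert (a + / 2 * (t * q) < 0) by lra. nra.
Qed.

Section Char.
Variables (S : nat) (p0 : nat -> R) (U : R -> R).
Hypothesis hU0 : U 0 = 0.

Let d (g : nat -> R) := fun k => g k - W U p0 k.

Lemma VI g h : is_minimizer U p0 S g -> in_CK p0 S h -> 0 <= ip (S+2) (d g) (fun k => h k - g k).
Proof.
  intros [Hg Hmin] Hh. apply (small_t _ (nrm (S+2) (fun k => h k - g k))); [apply nrm_nonneg|].
  intros t Ht0 Ht1.
  assert (HC : in_CK p0 S (fun k => (1 - t) * g k + t * h k)) by (apply in_CK_comb; auto; lra).
  specialize (Hmin _ HC). pose proof (Phi_diff U p0 S g (fun k => (1 - t) * g k + t * h k)) as E.
  unfold ip, nrm in *.
  rewrite (sumR_ext _ (fun k => t * (d g k * (h k - g k)))) in E by (intros; unfold d; ring).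
  rewrite (sumR_ext (fun k => ((1 - t) * g k + t * h k - g k) ^ 2) (fun k => t^2 * ((h k - g k)^2))) in E by (intros; ring).
  rewrite !sumR_scal in E. unfold d in *. lra.
Qed.

Lemma hinge_CK x : in_CK p0 S (hinge x).
Proof.
  intros a b Hc k H1 H2. rewrite Delta_hinge by lia. destruct (Nat.eqb k x); lra.
Qed.

Lemma sub_CK g x t : in_CK p0 S g -> 0 <= t ->
  (forall a b, consec_s p0 S a b -> (a < x)%nat -> (x < b)%nat -> t <= Defs.Delta g x) ->
  in_CK p0 S (fun k => 1 * g k + (- t) * hinge x k).
Proof.
  intros Hg Ht Hx a b Hc k H1 H2. rewrite Delta_lin. rewrite Delta_hinge by lia.
  pose proof (Hg a b Hc k H1 H2).
  destruct (Nat.eqb_spec k x).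
  - subst. specialize (Hx a b Hc H1 H2). lra.
  - lra.
Qed.

Lemma ip_hinge g x : (x <= S + 2)%nat -> ip (S+2) (d g) (hinge x) = Hhat g x - HH U p0 x.
Proof. intros Hx. unfold ip. rewrite hinge_sum by auto. rewrite D_eq by auto. reflexivity. Qed.

Lemma forward g : is_minimizer U p0 S g -> char_cond U p0 S g.
Proof.
  intros Hm. pose proof Hm as [Hg _]. split.
  - intros x Hx. pose proof (VI g _ Hm (in_CK_comb p0 S 1 1 g (hinge x) ltac:(lra) ltac:(lra) Hg (hinge_CK x))) as V.
    unfold ip in V. rewrite (sumR_ext _ (fun k => d g k * hinge x k)) in V by (intros; ring).
    fold (ip (S+2) (d g) (hinge x)) in V. rewrite ip_hinge in V by auto. lra.
  - intros x Hx Hcase.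
    assert (Hge : HH U p0 x <= Hhat g x).
    { pose proof (VI g _ Hm (in_CK_comb p0 S 1 1 g (hinge x) ltac:(lra) ltac:(lra) Hg (hinge_CK x))) as V.
      unfold ip in V. rewrite (sumR_ext _ (fun k => d g k * hinge x k)) in V by (intros; ring).
      fold (ip (S+2) (d g) (hinge x)) in V. rewrite ip_hinge in V by auto. lra. }
    assert (exists t, 0 < t /\ forall a b, consec_s p0 S a b -> (a < x)%nat -> (x < b)%nat -> t <= Defs.Delta g x) as [t [Ht Htx]].
    { destruct Hcase as [Hs|[HS2|[a [b [Hc [H1 [H2 Hpos]]]]]]].
      - exists 1. split; [lra|]. intros a b [_ [_ [_ Hno]]] H1 H2. exfalso. apply (Hno x H1 H2 Hs).
      - exists 1. split; [lra|]. intros a b [_ [Hb _]] H1 H2. apply is_s_le in Hb. lia.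
      - exists (Defs.Delta g x). split; auto. intros; lra. }
    pose proof (VI g _ Hm (sub_CK g x t Hg ltac:(lra) Htx)) as V.
    unfold ip in V. rewrite (sumR_ext _ (fun k => (-t) * (d g k * hinge x k))) in V by (intros; ring).
    rewrite sumR_scal in V. fold (ip (S+2) (d g) (hinge x)) in V. rewrite ip_hinge in V by auto.
    assert (Hhat g x - HH U p0 x <= 0) by nra. lra.
Qed.

Lemma ip_sbp g v : char_cond U p0 S g ->
  ip (S+2) (d g) v = sumR (fun x => DD (d g) (x+1) * Defs.Delta v (x+1)) S.
Proof.
  intros [_ Heq]. unfold ip, d. rewrite sbp.
  rewrite <- !D_eq by auto.
  rewrite (Heq (S+2)%nat) by (first [lia | right; left; auto]).
  rewrite (Heq (S+1)%nat) by (first [lia | left; apply is_s_end]). ring.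
Qed.

Lemma backward g : in_CK p0 S g -> char_cond U p0 S g -> is_minimizer U p0 S g.
Proof.
  intros Hg Hc. split; auto. intros h Hh.
  pose proof (Phi_diff U p0 S g h) as E.
  assert (ip (S+2) (d g) (fun k => h k - g k) = ip (S+2) (d g) h - ip (S+2) (d g) g) as E2.
  { unfold ip. rewrite <- sumR_minus. apply sumR_ext; intros; ring. }
  assert (0 <= ip (S+2) (d g) h).
  { rewrite ip_sbp by auto. apply sumR_nonneg. intros y Hy.
    unfold d; rewrite <- D_eq by auto. destruct Hc as [Hge Heq].
    destruct (classic (is_s p0 S (y+1))) as [Hs|Hns].
    - rewrite Heq by (first [lia | left; auto]). rewrite Rminus_diag. lra.
    - destruct (block p0 S (y+1) ltac:(lia) ltac:(lia) Hns) as [a [b [Hcs [H1 H2]]]].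
      pose proof (Hh a b Hcs _ H1 H2). pose proof (Hge (y+1)%nat ltac:(lia)). nra. }
  assert (ip (S+2) (d g) g = 0).
  { rewrite ip_sbp by auto. apply sumR_zero. intros y Hy.
    unfold d; rewrite <- D_eq by auto. destruct Hc as [Hge Heq].
    destruct (classic (is_s p0 S (y+1))) as [Hs|Hns].
    - rewrite Heq by (first [lia | left; auto]). rewrite Rminus_diag. lra.
    - destruct (block p0 S (y+1) ltac:(lia) ltac:(lia) Hns) as [a [b [Hcs [H1 H2]]]].
      pose proof (Hg a b Hcs _ H1 H2) as HD. destruct HD as [Hpos|H0].
      + rewrite Heq by (first [lia | right; right; exists a, b; auto]). rewrite Rminus_diag. lra.
      + rewrite <- H0. ring. }
  pose proof (nrm_nonneg (S+2) (fun k => h k - g k)). unfold d in *. lra.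
Qed.

End Char.

Lemma cv_const c : Un_cv (fun _ => c) c.
Proof. intros e He. exists 0%nat. intros. unfold Rdist. rewrite Rminus_diag, Rabs_R0. lra. Qed.

Lemma inv_lt a b : 0 < a -> 1 < a * b -> / a < b.
Proof.
  intros Ha H. apply Rmult_lt_reg_l with a; auto. rewrite Rinv_r by lra. lra.
Qed.

Lemma small_inv e : 0 < e -> exists N, forall n, (n >= N)%nat -> / (INR n + 1) < e.
Proof.
  intros He. destruct (INR_unbounded (/ e)) as [N HN]. exists N. intros n Hn.
  apply le_INR in Hn. assert (0 < / e) by (apply Rinv_0_lt_compat; auto).
  apply inv_lt; [lra|]. assert (/ e * e = 1) by (field; lra).
  assert (/ e * e < (INR n + 1) * e) by (apply Rmult_lt_compat_r; lra). lra.
Qed.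

Lemma cv_inv : Un_cv (fun n => / (INR n + 1)) 0.
Proof.
  intros e He. destruct (small_inv e He) as [N HN]. exists N. intros n Hn.
  unfold Rdist. rewrite Rminus_0_r. pose proof (pos_INR n).
  rewrite Rabs_right by (left; apply Rinv_0_lt_compat; lra). auto.
Qed.

Lemma Phi_nonneg U p0 S h : 0 <= Phi U p0 S h.
Proof. unfold Phi. pose proof (sumR_nonneg (fun k => (h k - W U p0 k)^2) (S+2) ltac:(intros; apply pow2_ge_0)). lra. Qed.

Lemma uniq S p0 U g1 g2 : is_minimizer U p0 S g1 -> is_minimizer U p0 S g2 ->
  forall k, (k <= S + 1)%nat -> g1 k = g2 k.
Proof.
  intros [H1 M1] [H2 M2] k Hk.
  pose proof (M1 _ H2). pose proof (M2 _ H1).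
  pose proof (M1 _ (in_CK_comb p0 S (/2) (/2) g1 g2 ltac:(lra) ltac:(lra) H1 H2)) as Hm.
  rewrite Phi_mid in Hm.
  pose proof (nrm_term (S+2) (fun k => g1 k - g2 k) k ltac:(lia)). simpl in *.
  assert ((g1 k - g2 k) ^ 2 <= 0) by lra. nra.
Qed.

Definition tr (S : nat) (h : nat -> R) (k : nat) : R := if Nat.leb k (S + 1) then h k else 0.

Lemma tr_CK p0 S h : in_CK p0 S h -> in_CK p0 S (tr S h).
Proof.
  intros Hh a b Hc k H1 H2. pose proof (Hh a b Hc k H1 H2).
  destruct Hc as [_ [Hb _]]. apply is_s_le in Hb.
  unfold Defs.Delta, tr in *.
  destruct (Nat.leb_spec (Datatypes.S k) (S+1)); [|lia].
  destruct (Nat.leb_spec k (S+1)); [|lia].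
  destruct (Nat.leb_spec (k-1) (S+1)); [|lia]. auto.
Qed.

Lemma tr_Phi U p0 S h : Phi U p0 S (tr S h) = Phi U p0 S h.
Proof.
  unfold Phi. f_equal. apply sumR_ext. intros k Hk. unfold tr.
  destruct (Nat.leb_spec k (S+1)); [auto|lia].
Qed.

Lemma cv_sumsq (F : nat -> nat -> R) (L w : nat -> R) N :
  (forall k, Un_cv (fun n => F n k) (L k)) ->
  Un_cv (fun n => sumR (fun k => (F n k - w k) ^ 2) N) (sumR (fun k => (L k - w k) ^ 2) N).
Proof.
  intros Hc. induction N; cbn [sumR].
  - apply cv_const.
  - apply CV_plus; auto.
    assert (Hd : Un_cv (fun n => F n N - w N) (L N - w N)) by (apply CV_minus; [apply Hc|apply cv_const]).
    assert (H2 := CV_mult _ _ _ _ Hd Hd). simpl in H2.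
    intros e He. destruct (H2 e He) as [M HM]. exists M. intros n Hn. specialize (HM n Hn).
    simpl. rewrite !Rmult_1_r. auto.
Qed.

Lemma cv_ge0 u l : (forall n, 0 <= u n) -> Un_cv u l -> 0 <= l.
Proof. intros H Hc. eapply Rle_cv_lim; [|apply cv_const|exact Hc]. simpl; auto. Qed.

Section Exist.
Variables (S : nat) (p0 : nat -> R) (U : R -> R).

Definition EE (r : R) : Prop := exists h, in_CK p0 S h /\ r = - Phi U p0 S h.

Lemma EE_bound : bound EE.
Proof. exists 0. intros r [h [_ ->]]. pose proof (Phi_nonneg U p0 S h). lra. Qed.

Lemma EE_ne : exists r, EE r.
Proof.
  exists (- Phi U p0 S (fun _ => 0)). exists (fun _ => 0). split; auto.
  intros a b _ k _ _. unfold Defs.Delta. lra.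
Qed.

Definition lubE := proj1_sig (completeness EE EE_bound EE_ne).
Definition mE := - lubE.

Lemma mE_low h : in_CK p0 S h -> mE <= Phi U p0 S h.
Proof.
  intros Hh. unfold mE, lubE. destruct (completeness EE EE_bound EE_ne) as [l [Hub Hl0]]. simpl.
  assert (- Phi U p0 S h <= l) by (apply Hub; exists h; auto). lra.
Qed.

Lemma mE_approx e : 0 < e -> exists h, in_CK p0 S h /\ Phi U p0 S h < mE + e.
Proof.
  intros He. unfold mE, lubE. destruct (completeness EE EE_bound EE_ne) as [l [Hub Hl]]. simpl.
  apply NNPP. intros Hn.
  assert (is_upper_bound EE (l - e)).
  { intros r [h [Hh ->]]. destruct (Rle_or_lt (- Phi U p0 S h) (l - e)); auto.
    exfalso; apply Hn. exists h. split; auto. lra. }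
  specialize (Hl _ H). lra.
Qed.

Lemma posn n : 0 < INR n + 1.
Proof. pose proof (pos_INR n); lra. Qed.

Definition seqh (n : nat) : nat -> R :=
  proj1_sig (constructive_indefinite_description _
    (mE_approx (/ (INR n + 1)) (Rinv_0_lt_compat _ (posn n)))).

Definition gn (n : nat) : nat -> R := tr S (seqh n).

Lemma gn_CK n : in_CK p0 S (gn n).
Proof.
  unfold gn, seqh. destruct (constructive_indefinite_description _ _) as [h [Hh Hh0]]. simpl. apply tr_CK; auto.
Qed.

Lemma gn_Phi n : Phi U p0 S (gn n) < mE + / (INR n + 1).
Proof.
  unfold gn, seqh. destruct (constructive_indefinite_description _ _) as [h [Hh0 Hh]]. simpl. rewrite tr_Phi; auto.
Qed.

Lemma gn_diff n p k : (gn n k - gn p k) ^ 2 <= 4 * (/ (INR n + 1) + / (INR p + 1)).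
Proof.
  destruct (Nat.leb_spec k (S+1)).
  - pose proof (mE_low _ (in_CK_comb p0 S (/2) (/2) _ _ ltac:(lra) ltac:(lra) (gn_CK n) (gn_CK p))) as Hm.
    rewrite Phi_mid in Hm. pose proof (gn_Phi n). pose proof (gn_Phi p).
    pose proof (nrm_term (S+2) (fun k => gn n k - gn p k) k ltac:(lia)). simpl in *. lra.
  - unfold gn, tr. destruct (Nat.leb_spec k (S+1)); [lia|].
    pose proof (pos_INR n). pose proof (pos_INR p).
    assert (0 < / (INR n + 1)) by (apply Rinv_0_lt_compat; lra).
    assert (0 < / (INR p + 1)) by (apply Rinv_0_lt_compat; lra). simpl. lra.
Qed.

Lemma gn_cauchy k : Cauchy_crit (fun n => gn n k).
Proof.
  intros e He. destruct (small_inv (e^2 / 8) ltac:(nra)) as [N HN]. exists N.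
  intros n p Hn Hp. pose proof (HN n Hn). pose proof (HN p Hp). pose proof (gn_diff n p k).
  unfold Rdist. assert ((gn n k - gn p k)^2 < e^2) by lra.
  destruct (Rle_or_lt 0 (gn n k - gn p k)).
  - rewrite Rabs_right by lra. nra.
  - rewrite Rabs_left by lra. nra.
Qed.

Definition gstar (k : nat) : R := proj1_sig (R_complete _ (gn_cauchy k)).

Lemma gstar_cv k : Un_cv (fun n => gn n k) (gstar k).
Proof. unfold gstar. destruct (R_complete _ _); auto. Qed.

Lemma gstar_min : is_minimizer U p0 S gstar.
Proof.
  split.
  - intros a b Hc k H1 H2. apply (cv_ge0 (fun n => Defs.Delta (gn n) k)).
    + intros n. apply (gn_CK n a b Hc k H1 H2).
    + unfold Defs.Delta. apply CV_plus; [apply CV_minus|].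
      * apply gstar_cv.
      * apply CV_mult; [apply cv_const|apply gstar_cv].
      * apply gstar_cv.
  - intros h Hh. apply Rle_trans with mE; [|apply mE_low; auto].
    assert (Hc : Un_cv (fun n => Phi U p0 S (gn n)) (Phi U p0 S gstar)).
    { unfold Phi. apply CV_mult; [apply cv_const|]. apply (cv_sumsq gn gstar). apply gstar_cv. }
    assert (Hv : Un_cv (fun n => mE + / (INR n + 1)) mE).
    { pose proof (CV_plus _ _ _ _ (cv_const mE) cv_inv) as H. rewrite Rplus_0_r in H. exact H. }
    eapply Rle_cv_lim; [|exact Hc|exact Hv]. intros n; apply Rlt_le, gn_Phi.
Qed.

End Exist.

Theorem theorem2 (S : nat) (p0 : nat -> R) (U : R -> R)
  (hS : (1 <= S)%nat)
  (hp0 : convex_pmf_support p0 S)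
  (hU0 : U 0 = 0) (hU1 : U 1 = 0) :
  (exists g, is_minimizer U p0 S g) /\
  (forall g1 g2, is_minimizer U p0 S g1 -> is_minimizer U p0 S g2 ->
     forall k, (k <= S + 1)%nat -> g1 k = g2 k) /\
  (forall g, in_CK p0 S g -> (is_minimizer U p0 S g <-> char_cond U p0 S g)).
Proof.
  split; [exists (gstar S p0 U); apply gstar_min|].
  split; [apply uniq|].
  intros g Hg. split; [apply forward; auto|apply backward; auto].
Qed.
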